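(* Assume $f$ is in Case 2. Then, for every sufficiently small $r>0$, $A_f^l=A_0\setminus E_z$ holds for every $l>0$ if $\delta\le d$, and for every $0<l<\alpha$ if $\delta>d$ and $(n_1,m_1)\neq(0,\delta)$.
   Context: Let $f(z,w)=(p(z),q(z,w))$ be a holomorphic skew product defined on $\mathbb{C}^2$ or on $\{|z|<R\}\times\mathbb{C}$, where $R$ is so large that the attracting basin $A_p$ of $p$ at $0$ is relatively compact in $\{|z|<R\}$. Assume $p(z)=az^{\delta}+O(z^{\delta+1})$, $a\neq0$, $\delta\ge2$, and $q(z,w)=\sum_{i,j\ge0}b_{ij}z^iw^j$ with $b_{00}=b_{01}=0$. The Newton polygon $N(q)$ is the convex hull of $\bigcup_{b_{ij}\ne0}\{(x,y):x\ge i,\ y\ge j\}$, with vertices $(n_1,m_1),\dots,(n_s,m_s)$, $n_1<\dots<n_s$, $m_1>\dots>m_s$, $s>1$; $T_{s-1}$ is the $y$-intercept of the line through $(n_{s-1},m_{s-1})$ and $(n_s,m_s)$. Case 2 means $\delta\le T_{s-1}$; set $(\gamma,d)=(n_s,m_s)$ and, when $\delta\ne d$, $\alpha=\gamma/(\delta-d)$. For $l>0$ let $U^l=\{|z|<r,\ |w|<r|z|^l\}$ and $A_f^l=\bigcup_{n\ge0}f^{-n}(U^l)$. $A_0$ is the attracting basin of the origin for $f$, and $E_z=\bigcup_{n\ge0}f^{-n}(\{z=0\})$. *)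

(* Defs.v *)
From HB Require Import structures.
From mathcomp Require Import all_boot all_order all_algebra.
From mathcomp Require Import complex.
From mathcomp Require Import reals exp.
Set Implicit Arguments.
Unset Strict Implicit.
Unset Printing Implicit Defensive.
Import Order.TTheory GRing.Theory Num.Theory.
Local Open Scope ring_scope.

Section Defs.
Variable R : realType.
Local Notation C := (R[i]).

Definition cabs (z : C) : R := Normc.normc z.

Definition skew (p : C -> C) (q : C -> C -> C) (x : C * C) : C * C :=
  (p x.1, q x.1 x.2).

Definition pseries1 (a : nat -> C) (p : C -> C) (z : C) : Prop :=
  (exists M : R, forall N, \sum_(k < N) cabs (a k) * cabs z ^+ k <= M) /\
  (forall eps : R, 0 < eps -> exists N0, forall N, (N0 <= N)%N ->
     cabs (p z - \sum_(k < N) a k * z ^+ k) < eps).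

Definition pseries2 (b : nat -> nat -> C) (q : C -> C -> C) (z w : C) : Prop :=
  (exists M : R, forall N,
      \sum_(i < N) \sum_(j < N) cabs (b i j) * cabs z ^+ i * cabs w ^+ j <= M) /\
  (forall eps : R, 0 < eps -> exists N0, forall N, (N0 <= N)%N ->
     cabs (q z w - \sum_(i < N) \sum_(j < N) b i j * z ^+ i * w ^+ j) < eps).

Definition basin1 (DZ : C -> Prop) (p : C -> C) : C -> Prop :=
  fun z => (forall k, DZ (iter k p z)) /\
    (forall eps : R, 0 < eps -> exists N, forall k, (N <= k)%N ->
        cabs (iter k p z) < eps).

Definition basin2 (DZ : C -> Prop) (p : C -> C) (q : C -> C -> C) : C * C -> Prop :=
  fun x => (forall k, DZ (iter k (skew p q) x).1) /\
    (forall eps : R, 0 < eps -> exists N, forall k, (N <= k)%N ->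
        cabs (iter k (skew p q) x).1 < eps /\ cabs (iter k (skew p q) x).2 < eps).

(* f^{-n}(U): points whose first n iterates are defined (stay in DZ x C)
   and whose n-th iterate lies in U *)
Definition preim_iter (DZ : C -> Prop) (p : C -> C) (q : C -> C -> C)
    (n : nat) (U : C * C -> Prop) : C * C -> Prop :=
  fun x => (forall k, (k <= n)%N -> DZ (iter k (skew p q) x).1) /\
           U (iter n (skew p q) x).

Definition Ez (DZ : C -> Prop) (p : C -> C) (q : C -> C -> C) : C * C -> Prop :=
  fun x => exists n, preim_iter DZ p q n (fun y => y.1 = 0) x.

Definition Ul (r l : R) : C * C -> Prop :=
  fun x => cabs x.1 < r /\ cabs x.2 < r * powR (cabs x.1) l.

Definition Afl (DZ : C -> Prop) (p : C -> C) (q : C -> C -> C) (r l : R)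
  : C * C -> Prop :=
  fun x => exists n, preim_iter DZ p q n (Ul r l) x.

(* the admissible domains for the z-variable: all of C, or a disc {|z| < Rd}
   in which the basin A_p is relatively compact (its closure, taken in C, is a
   compact subset of the open disc, i.e. A_p lies in a closed disc of radius
   R' < Rd) *)
Definition admissible_domain (DZ : C -> Prop) (p : C -> C) : Prop :=
  (forall z, DZ z) \/
  (exists Rd : R, 0 < Rd /\ (forall z, DZ z <-> cabs z < Rd) /\
     exists R' : R, R' < Rd /\ forall z, basin1 DZ p z -> cabs z <= R').

Definition NPquad (b : nat -> nat -> C) (v : R * R) : Prop :=
  exists i j : nat, b i j != 0 /\ (i%:R <= v.1) /\ (j%:R <= v.2).

Definition conv_hull (S : R * R -> Prop) (v : R * R) : Prop :=
  exists (n : nat) (u : 'I_n -> R * R) (t : 'I_n -> R),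
    (forall k, S (u k)) /\ (forall k, 0 <= t k) /\ \sum_(k < n) t k = 1 /\
    v = (\sum_(k < n) t k * (u k).1, \sum_(k < n) t k * (u k).2).

Definition newton_polygon (b : nat -> nat -> C) : R * R -> Prop :=
  conv_hull (NPquad b).

Definition is_vertex (S : R * R -> Prop) (v : R * R) : Prop :=
  S v /\ forall a c : R * R, forall t : R, S a -> S c -> 0 < t -> t < 1 ->
    v = (t * a.1 + (1 - t) * c.1, t * a.2 + (1 - t) * c.2) -> a = c.

Definition NP_vertices (b : nat -> nat -> C) (s : nat) (nv mv : nat -> nat) : Prop :=
  (forall k, (1 <= k)%N -> (k < s)%N -> (nv k < nv k.+1)%N /\ (mv k.+1 < mv k)%N) /\
  (forall v, is_vertex (newton_polygon b) v <->
     exists k, [/\ (1 <= k)%N, (k <= s)%N & v = ((nv k)%:R, (mv k)%:R)]).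

(* y-intercept of the line through (n_{s-1},m_{s-1}) and (n_s,m_s) *)
Definition T_last (s : nat) (nv mv : nat -> nat) : R :=
  (mv s.-1)%:R + (nv s.-1)%:R * (((mv s.-1)%:R - (mv s)%:R) / ((nv s)%:R - (nv s.-1)%:R)).

End Defs.

(* Main.v *)
Require Import Defs.
From HB Require Import structures.
From mathcomp Require Import all_boot all_order all_algebra.
From mathcomp Require Import complex.
From mathcomp Require Import reals exp.
From mathcomp Require Import sequences.
From Stdlib Require Classical_Prop.
From mathcomp Require Import ring lra.
Set Implicit Arguments.
Unset Strict Implicit.
Unset Printing Implicit Defensive.
Import Order.TTheory GRing.Theory Num.Theory.
Local Open Scope ring_scope.
Section P1.
Variable R : realType.
Local Notation C := (R[i]).

Lemma cabs_ge0 (z : C) : 0 <= cabs z.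
Proof. by case: z => x y; rewrite /cabs /= sqrtr_ge0. Qed.

Lemma cabsM (x y : C) : cabs (x * y) = cabs x * cabs y.
Proof. exact: Normc.normcM. Qed.

Lemma cabsX (x : C) n : cabs (x ^+ n) = cabs x ^+ n.
Proof.
elim: n => [|n IH]; first by rewrite !expr0 /cabs Normc.normc1.
by rewrite !exprS cabsM IH.
Qed.

Lemma cabsD (x y : C) : cabs (x + y) <= cabs x + cabs y.
Proof. exact: le_normcD. Qed.

Lemma cabsN (x : C) : cabs (- x) = cabs x.
Proof. exact: normcN. Qed.

Lemma cabs0 : cabs (0 : C) = 0.
Proof. exact: Normc.normc0. Qed.

Lemma cabs_eq0 (x : C) : cabs x = 0 -> x = 0.
Proof. exact: Normc.eq0_normc. Qed.

Lemma cabs_gt0 (x : C) : x != 0 -> 0 < cabs x.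
Proof.
move=> nz; rewrite lt_neqAle cabs_ge0 andbT; apply/eqP => h.
by move/eqP: nz; apply; apply: cabs_eq0.
Qed.

Lemma cabs_real (x : R) : cabs (Complex x 0) = `|x|.
Proof. by rewrite /cabs /= expr0n /= addr0 sqrtr_sqr. Qed.

Lemma cabsB (x y : C) : cabs x - cabs y <= cabs (x - y).
Proof.
have := cabsD (x - y) y; rewrite subrK; lra.
Qed.

Lemma cabs_sum N (F : nat -> C) :
  cabs (\sum_(k < N) F k) <= \sum_(k < N) cabs (F k).
Proof.
elim: N => [|N IH]; first by rewrite !big_ord0 cabs0.
rewrite !big_ord_recr /=; apply: le_trans (cabsD _ _) _; exact: lerD.
Qed.

Lemma lim_bound (v : C) (S : nat -> C) (B : R) :
  (forall eps : R, 0 < eps -> exists N0, forall N, (N0 <= N)%N -> cabs (v - S N) < eps) ->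
  (forall N, cabs (S N) <= B) -> cabs v <= B.
Proof.
move=> hc hb; rewrite leNgt; apply/negP => hlt.
have hpos : 0 < cabs v - B by rewrite subr_gt0.
have [N0 hN0] := hc _ hpos.
have h1 := hN0 N0 (leqnn _); have h2 := hb N0.
have := cabsD (v - S N0) (S N0); rewrite subrK; lra.
Qed.

Lemma series1_bound (c : nat -> C) (z v : C) (d : nat -> R) (E M : R) :
  (forall eps : R, 0 < eps -> exists N0, forall N, (N0 <= N)%N ->
     cabs (v - \sum_(k < N) c k * z ^+ k) < eps) ->
  0 <= E ->
  (forall k, cabs (c k) * cabs z ^+ k <= E * d k) ->
  (forall N, \sum_(k < N) d k <= M) -> cabs v <= E * M.
Proof.
move=> hc hE hk hM.
apply: (@lim_bound v (fun N => \sum_(k < N) c k * z ^+ k)) => // N.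
apply: le_trans (cabs_sum N (fun k => c k * z ^+ k)) _.
apply: le_trans (_ : \sum_(k < N) E * d k <= _).
  by apply: ler_sum => k _; rewrite cabsM cabsX.
by rewrite -mulr_sumr; apply: ler_wpM2l.
Qed.

Lemma series2_bound (c : nat -> nat -> C) (z w v : C) (d : nat -> nat -> R) (E M : R) :
  (forall eps : R, 0 < eps -> exists N0, forall N, (N0 <= N)%N ->
     cabs (v - \sum_(i < N) \sum_(j < N) c i j * z ^+ i * w ^+ j) < eps) ->
  0 <= E ->
  (forall i j, cabs (c i j) * cabs z ^+ i * cabs w ^+ j <= E * d i j) ->
  (forall N, \sum_(i < N) \sum_(j < N) d i j <= M) -> cabs v <= E * M.
Proof.
move=> hc hE hk hM.
apply: (@lim_bound v (fun N => \sum_(i < N) \sum_(j < N) c i j * z ^+ i * w ^+ j)) => // N.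
apply: le_trans (cabs_sum N (fun i => \sum_(j < N) c i j * z ^+ i * w ^+ j)) _.
apply: le_trans (_ : \sum_(i < N) \sum_(j < N) E * d i j <= _).
  apply: ler_sum => i _; apply: le_trans (cabs_sum N (fun j => c i j * z ^+ i * w ^+ j)) _.
  by apply: ler_sum => j _; rewrite !cabsM !cabsX.
under eq_bigr do rewrite -mulr_sumr.
by rewrite -mulr_sumr; apply: ler_wpM2l.
Qed.

End P1.
Section P2.
Variable R : realType.

Lemma conv_single (S : R * R -> Prop) v : S v -> conv_hull S v.
Proof.
move=> Sv; exists 1%N, (fun _ => v), (fun _ => 1); split=> //; split=> //.
split; first by rewrite big_ord1.
by rewrite !big_ord1 !mul1r; case: v Sv.
Qed.

Lemma conv2 (S : R * R -> Prop) a c (t : R) :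
  conv_hull S a -> conv_hull S c -> 0 <= t -> t <= 1 ->
  conv_hull S (t * a.1 + (1 - t) * c.1, t * a.2 + (1 - t) * c.2).
Proof.
move=> [n1 [u1 [t1 [hu1 [ht1 [hs1 ->]]]]]] [n2 [u2 [t2 [hu2 [ht2 [hs2 ->]]]]]] t0 t1le.
pose u (k : 'I_(n1 + n2)) := match split k with inl i => u1 i | inr j => u2 j end.
pose tt (k : 'I_(n1 + n2)) := match split k with inl i => t * t1 i | inr j => (1 - t) * t2 j end.
have El (i : 'I_n1) : split (lshift n2 i) = inl i := unsplitK (inl i).
have Er (j : 'I_n2) : split (rshift n1 j) = inr j := unsplitK (inr j).
exists (n1 + n2)%N, u, tt; split.
  by move=> k; rewrite /u; case: (split k).
split.
  move=> k; rewrite /tt; case: (split k) => i; apply: mulr_ge0 => //; lra.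
split.
  rewrite big_split_ord /=; rewrite /tt.
  under [X in X + _]eq_bigr do rewrite El.
  under [X in _ + X]eq_bigr do rewrite Er.
  by rewrite /= -!mulr_sumr hs1 hs2 !mulr1 addrC subrK.
rewrite /=; congr (_, _); rewrite big_split_ord /= /tt /u;
  (under [X in _ = X + _]eq_bigr do rewrite El);
  (under [X in _ = _ + X]eq_bigr do rewrite Er);
  rewrite /= !mulr_sumr; congr (_ + _); apply: eq_bigr => i _; by rewrite mulrA.
Qed.

Lemma conv_up (S : R * R -> Prop) v (e : R) :
  (forall u, S u -> S (u.1, u.2 + e)) -> conv_hull S v -> conv_hull S (v.1, v.2 + e).
Proof.
move=> hS [n [u [t [hu [ht [hs ->]]]]]].
exists n, (fun k => ((u k).1, (u k).2 + e)), t; split; first by move=> k; exact: hS.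
split=> //; split=> //=.
congr (_, _).
have -> : \sum_(k < n) t k * ((u k).2 + e) = \sum_(k < n) t k * (u k).2 + \sum_(k < n) t k * e.
  by rewrite -big_split /=; apply: eq_bigr => k _; rewrite mulrDr.
by rewrite -mulr_suml hs mul1r.
Qed.

Lemma conv_lin (S : R * R -> Prop) (al be m x0 : R) v :
  (forall u, S u -> m <= al * u.1 + be * u.2) ->
  (forall u, S u -> al * u.1 + be * u.2 = m -> x0 <= u.1) ->
  conv_hull S v -> m <= al * v.1 + be * v.2 /\ (al * v.1 + be * v.2 = m -> x0 <= v.1).
Proof.
move=> hm hx [n [u [t [hu [ht [hs ->]]]]]] /=.
have eL : al * (\sum_(k < n) t k * (u k).1) + be * (\sum_(k < n) t k * (u k).2) - m
          = \sum_(k < n) t k * (al * (u k).1 + be * (u k).2 - m).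
  rewrite [RHS](_ : _ = \sum_(k < n) (al * (t k * (u k).1) + be * (t k * (u k).2))
     - \sum_(k < n) t k * m); last first.
    by rewrite -sumrB; apply: eq_bigr => k _; ring.
  by rewrite big_split /= -!mulr_sumr -mulr_suml hs mul1r.
have pos k : 0 <= t k * (al * (u k).1 + be * (u k).2 - m).
  by apply: mulr_ge0 => //; rewrite subr_ge0; apply: hm.
split.
  rewrite -subr_ge0 eL; exact: sumr_ge0.
move=> heq.
have h0 : \sum_(k < n) t k * (al * (u k).1 + be * (u k).2 - m) = 0.
  by rewrite -eL heq subrr.
have hz := psumr_eq0P (fun k _ => pos k) h0.
rewrite -[x0]mul1r -hs mulr_suml; apply: ler_sum => k _.
have [->|tk0] := eqVneq (t k) 0; first by rewrite !mul0r.
apply: ler_wpM2l => //; apply: hx => //.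
have := hz k isT; move/eqP; rewrite mulf_eq0 (negbTE tk0) /= subr_eq0 => /eqP //.
Qed.

End P2.
Section P3.
Variable R : realType.
Local Notation C := (R[i]).

Lemma nat_gt (x : R) : exists n : nat, x < n%:R.
Proof.
exists (Num.bound `|x|); apply: le_lt_trans (real_ler_norm _) _; first exact: num_real.
exact: archi_boundP.
Qed.

Variable b : nat -> nat -> C.

Lemma NPquad_up (e : R) : 0 <= e -> forall u, NPquad b u -> NPquad b (u.1, u.2 + e).
Proof.
move=> e0 u [i [j [hb [h1 h2]]]]; exists i, j; split=> //; split=> //=.
by apply: le_trans h2 _; rewrite lerDl.
Qed.

Lemma min_vertex s nv mv (lp : R) i0 j0 : NP_vertices b s nv mv -> 0 < lp ->
  b i0 j0 != 0 -> exists k, [/\ (1 <= k)%N, (k <= s)%N &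
     (nv k)%:R + lp * (mv k)%:R <= i0%:R + lp * j0%:R].
Proof.
move=> [_ hv] lp0 hb0.
pose Lij (i j : nat) : R := i%:R + lp * j%:R.
pose L0 := Lij i0 j0.
have [Bn hBn] := nat_gt (L0 + L0 / lp).
have L0ge : 0 <= L0 by rewrite /L0 /Lij addr_ge0 // mulr_ge0 // ltW.
have bnd i j : Lij i j <= L0 -> (i < Bn)%N /\ (j < Bn)%N.
  rewrite /Lij => hl.
  have hi : (i%:R : R) <= L0 by apply: le_trans hl; rewrite lerDl mulr_ge0 // ltW.
  have hj : (j%:R : R) <= L0 / lp.
    by rewrite ler_pdivlMr // mulrC; apply: le_trans hl; rewrite lerDr.
  have hL0lp : 0 <= L0 / lp by rewrite divr_ge0 // ltW.
  split; rewrite -(ltr_nat R); apply: le_lt_trans hBn; lra.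
have [hi0 hj0] := bnd i0 j0 (lexx _).
pose I := ('I_Bn * 'I_Bn)%type.
pose P := [pred w : I | (b w.1 w.2 != 0) && (Lij w.1 w.2 <= L0)].
pose w0 : I := (Ordinal hi0, Ordinal hj0).
have Pw0 : P w0 by rewrite /P /= hb0 lexx.
case: (arg_minP (fun w : I => Lij w.1 w.2) Pw0) => w1 Pw1 min1.
pose m := Lij w1.1 w1.2.
pose P2 := [pred w : I | P w && (Lij w.1 w.2 == m)].
have P2w1 : P2 w1 by rewrite /P2 /= eqxx andbT; exact: Pw1.
case: (arg_minP (fun w : I => ((w.1 : nat)%:R : R)) P2w1) => w2 /andP [Pw2 /eqP Lw2] min2.
have factA i j : b i j != 0 -> m <= Lij i j.
  move=> hb; case: (leP (Lij i j) L0) => hl.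
    have [hi hj] := bnd i j hl.
    by apply: (min1 (Ordinal hi, Ordinal hj)); rewrite /P /= hb hl.
  by apply: le_trans (ltW hl); move/andP: Pw1 => [_ ].
have factB i j : b i j != 0 -> Lij i j = m -> ((w2.1 : nat)%:R : R) <= i%:R.
  move=> hb hl; have hl' : Lij i j <= L0 by rewrite hl; move/andP: Pw1 => [_].
  have [hi hj] := bnd i j hl'.
  by apply: (min2 (Ordinal hi, Ordinal hj)); rewrite /P2 /P /= hb hl' hl eqxx.
have quadA u : NPquad b u -> m <= 1 * u.1 + lp * u.2.
  move=> [i [j [hb [h1 h2]]]]; apply: le_trans (factA i j hb) _.
  rewrite /Lij mul1r; apply: lerD => //; by rewrite ler_pM2l.
have quadB u : NPquad b u -> 1 * u.1 + lp * u.2 = m -> ((w2.1 : nat)%:R : R) <= u.1.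
  move=> [i [j [hb [h1 h2]]]] hu.
  have hA := factA i j hb.
  have h2' : lp * j%:R <= lp * u.2 by rewrite ler_pM2l.
  have e1 : (i%:R : R) = u.1.
    move: hA hu h1 h2'; rewrite /Lij mul1r => hA hu h1 h2'; lra.
  rewrite -e1; apply: factB hb _.
  move: hA hu h1 h2'; rewrite /Lij mul1r => hA hu h1 h2'; lra.
pose vs : R * R := (((w2.1 : nat)%:R), ((w2.2 : nat)%:R)).
have vsv : is_vertex (newton_polygon b) vs.
  split.
    apply: conv_single; exists w2.1, w2.2; split; first by move/andP: Pw2 => [].
    by split.
  case=> a1 a2; case=> c1 c2 t ha hc t0 t1 /= [e1 e2].
  have [hma hxa] := conv_lin quadA quadB ha.
  have [hmc hxc] := conv_lin quadA quadB hc.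
  move: hma hxa hmc hxc => /= hma hxa hmc hxc.
  have Lvs : m = (w2.1 : nat)%:R + lp * (w2.2 : nat)%:R by rewrite -Lw2.
  have eLa : 1 * a1 + lp * a2 = m.
    apply/eqP; rewrite eq_le hma andbT; rewrite Lvs e1 e2 mul1r in hma hmc *.
    nra.
  have eLc : 1 * c1 + lp * c2 = m.
    apply/eqP; rewrite eq_le hmc andbT; rewrite Lvs e1 e2 mul1r in hma hmc *.
    nra.
  have xa := hxa eLa; have xc := hxc eLc.
  have ea1 : a1 = (w2.1 : nat)%:R by apply/eqP; rewrite eq_le xa andbT e1; nra.
  have ec1 : c1 = (w2.1 : nat)%:R by apply/eqP; rewrite eq_le xc andbT e1; nra.
  have : lp * a2 = lp * c2 by rewrite mul1r in eLa eLc; lra.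
  move/(mulfI (lt0r_neq0 lp0)) => ->; by rewrite ea1 ec1.
have [k [k1 ks ek]] := (hv vs).1 vsv.
exists k; split=> //.
have -> : (nv k)%:R + lp * (mv k)%:R = m.
  by case: ek => <- <-; rewrite -Lw2.
exact: factA.
Qed.

End P3.
Section P4.
Variable R : realType.
Local Notation C := (R[i]).
Variable b : nat -> nat -> C.

Lemma vmono s nv mv : NP_vertices b s nv mv -> forall k k', (1 <= k)%N -> (k < k')%N ->
  (k' <= s)%N -> (nv k < nv k')%N /\ (mv k' < mv k)%N.
Proof.
move=> [hm _] k k' k1; elim: k' => // k' IH hkk' hks.
rewrite ltnS leq_eqVlt in hkk'; case/orP: hkk' => [/eqP ekk|hlt].
  by rewrite -ekk in hks *; exact: hm k1 hks.
have [h1 h2] := IH hlt (ltnW hks).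
have [h3 h4] := hm k' (leq_trans k1 (ltnW hlt)) hks.
split; [exact: ltn_trans h1 h3 | exact: ltn_trans h4 h2].
Qed.

Lemma vin s nv mv : NP_vertices b s nv mv -> forall k, (1 <= k)%N -> (k <= s)%N ->
  newton_polygon b ((nv k)%:R, (mv k)%:R).
Proof.
move=> [_ hv] k k1 ks.
have : is_vertex (newton_polygon b) ((nv k)%:R, (mv k)%:R) by apply/hv; exists k.
by case.
Qed.

Lemma convex_last s nv mv : NP_vertices b s nv mv -> (1 < s)%N ->
  forall k, (1 <= k)%N -> (k <= s)%N ->
  0 <= ((nv k)%:R - (nv s)%:R) * ((mv s.-1)%:R - (mv s)%:R)
       + ((mv k)%:R - (mv s)%:R) * ((nv s)%:R - (nv s.-1)%:R) :> R.
Proof.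
move=> hNP s1 k k1 ks.
have s1s : (s.-1 < s)%N by rewrite prednK ?ltnS // ltnW.
have s11 : (1 <= s.-1)%N by rewrite -ltnS prednK // ltnW.
rewrite leq_eqVlt in ks; case/orP: ks => [/eqP ->|ks].
  by rewrite !subrr !mul0r addr0.
have : (k <= s.-1)%N by rewrite -ltnS prednK // ltnW.
rewrite leq_eqVlt => /orP [/eqP ->|kl].
  nra.
have [hx1 hy1] := vmono hNP k1 kl (ltnW s1s).
have [hx2 hy2] := vmono hNP s11 s1s (leqnn _).
rewrite leNgt; apply/negP => hlt.
set xk : R := (nv k)%:R; set yk : R := (mv k)%:R.
set g : R := (nv s)%:R; set d : R := (mv s)%:R.
set x1 : R := (nv s.-1)%:R; set y1 : R := (mv s.-1)%:R.
have ltx1 : xk < x1 by rewrite ltr_nat.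
have ltx2 : x1 < g by rewrite ltr_nat.
have lty1 : y1 < yk by rewrite ltr_nat.
have lty2 : d < y1 by rewrite ltr_nat.
move: hlt; rewrite -/xk -/yk -/g -/d -/x1 -/y1 => hlt.
pose lam := (g - x1) / (g - xk).
have gxk : 0 < g - xk by lra.
have lam0 : 0 <= lam by rewrite /lam divr_ge0 //; lra.
have lam1 : lam <= 1 by rewrite /lam ler_pdivrMr // mul1r; lra.
have hp := conv2 (vin hNP k1 (ltnW (leq_trans kl (ltnW s1s)))) (vin hNP (ltnW s1) (leqnn s)) lam0 lam1.
move: hp; rewrite /= -/xk -/yk -/g -/d => hp.
have px : lam * xk + (1 - lam) * g = x1.
  rewrite /lam; field; lra.
set py := lam * yk + (1 - lam) * d.
have pylt : py < y1.
  have : lam * (yk - d) < y1 - d.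
    rewrite /lam mulrAC ltr_pdivrMr //; nra.
  rewrite /py; lra.
set e := y1 - py.
have e0 : 0 <= 2 * e by rewrite /e; lra.
have ha := conv_up (NPquad_up e0) hp.
move: ha hp; rewrite /= px => ha hc.
have [_ hv] := hNP.
have : is_vertex (newton_polygon b) (x1, y1) by apply/hv; exists s.-1; split => //; exact: ltnW.
case=> _ /(_ _ _ (2^-1) ha hc) H.
have : (x1, py + 2 * e) = (x1, py).
  apply: H; first lra; first lra.
  by rewrite /=; congr (_, _); rewrite /e /py; lra.
case; rewrite /e; lra.
Qed.


Lemma fin_pos_min (f : nat -> R) s : (forall k, (1 <= k)%N -> (k <= s)%N -> 0 < f k) ->
  exists2 e, 0 < e & forall k, (1 <= k)%N -> (k <= s)%N -> e <= f k.
Proof.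
elim: s => [|s IH] h.
  by exists 1 => // k k1 k0; move: (leq_trans k1 k0).
have [e e0 he] := IH (fun k k1 ks => h k k1 (leq_trans ks (leqnSn _))).
have fs : 0 < f s.+1 by apply: h.
exists (Num.min e (f s.+1)); first by rewrite lt_min e0 fs.
move=> k k1; rewrite leq_eqVlt => /orP [/eqP ->|ks]; first by rewrite ge_min lexx orbT.
by rewrite ge_min he.
Qed.

Lemma support_gap s nv mv (D lp : R) : NP_vertices b s nv mv -> 0 < lp ->
  (forall k, (1 <= k)%N -> (k <= s)%N -> 0 < (nv k)%:R + lp * ((mv k)%:R - D)) ->
  exists2 e, 0 < e & forall i j, b i j != 0 -> D * lp + e <= i%:R + lp * j%:R.
Proof.
move=> hNP lp0 hk.
have [e e0 he] := fin_pos_min hk.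
exists e => // i j hb.
have [k [k1 ks hle]] := min_vertex hNP lp0 hb.
have := he k k1 ks; lra.
Qed.

Lemma ek_case1 s nv mv (dl : nat) (lp : R) : NP_vertices b s nv mv -> (1 < s)%N ->
  (dl <= mv s)%N -> 0 < lp ->
  forall k, (1 <= k)%N -> (k <= s)%N -> 0 < (nv k)%:R + lp * ((mv k)%:R - dl%:R).
Proof.
move=> hNP s1 hd lp0 k k1 ks.
have mk : (mv s <= mv k)%N.
  move: ks; rewrite leq_eqVlt => /orP [/eqP ->//|ks].
  by have [_ /ltnW] := vmono hNP k1 ks (leqnn _).
have hd' : (dl%:R : R) <= (mv k)%:R by rewrite ler_nat (leq_trans hd mk).
case: (posnP (nv k)) => hn.
  have ek1 : k = 1%N.
    apply/eqP; rewrite eqn_leq k1 andbT; rewrite leqNgt; apply/negP => hk.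
    have [h _] := vmono hNP (leqnn 1) hk ks; by rewrite hn in h.
  have [_ h] := vmono hNP (leqnn 1) s1 (leqnn _).
  have : (dl%:R : R) < (mv k)%:R by rewrite ltr_nat ek1 (leq_ltn_trans hd h).
  rewrite hn add0r => hlt; apply: mulr_gt0 => //; lra.
have : (0 : R) < (nv k)%:R by rewrite ltr0n.
have : 0 <= lp * ((mv k)%:R - dl%:R) by apply: mulr_ge0; lra.
lra.
Qed.

Lemma ek_case2 s nv mv (dl : nat) (lp : R) : NP_vertices b s nv mv -> (1 < s)%N ->
  (dl%:R <= T_last R s nv mv) -> (mv s < dl)%N -> (nv 1%N, mv 1%N) <> (0%N, dl) ->
  0 < lp -> lp < (nv s)%:R / (dl%:R - (mv s)%:R) ->
  forall k, (1 <= k)%N -> (k <= s)%N -> 0 < (nv k)%:R + lp * ((mv k)%:R - dl%:R).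
Proof.
move=> hNP s1 hT hd hne lp0 hlp k k1 ks.
have s1s : (s.-1 < s)%N by rewrite prednK ?ltnS // ltnW.
have s11 : (1 <= s.-1)%N by rewrite -ltnS prednK // ltnW.
have hc := convex_last hNP s1 k1 ks.
have [hx2 hy2] := vmono hNP s11 s1s (leqnn _).
have xks : (nv k <= nv s)%N.
  move: ks; rewrite leq_eqVlt => /orP [/eqP ->//|ks].
  by have [/ltnW h _] := vmono hNP k1 ks (leqnn _).
move: hT hlp hc; rewrite /T_last.
set xk : R := (nv k)%:R; set yk : R := (mv k)%:R.
set g : R := (nv s)%:R; set d : R := (mv s)%:R.
set x1 : R := (nv s.-1)%:R; set y1 : R := (mv s.-1)%:R.
set D : R := dl%:R.
move=> hT hlp hc.
have ltx2 : x1 < g by rewrite ltr_nat.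
have lty2 : d < y1 by rewrite ltr_nat.
have dD : d < D by rewrite ltr_nat.
have xk0 : 0 <= xk by rewrite ler0n.
have xkg : xk <= g by rewrite ler_nat.
pose A := y1 - d; pose B := g - x1.
have B0 : 0 < B by rewrite /B; lra.
have A0 : 0 < A by rewrite /A; lra.
have TB : (D - d) * B <= g * A.
  have h1 : D * B <= (y1 + x1 * ((y1 - d) / (g - x1))) * B by rewrite ler_pM2r.
  have h2 : (y1 + x1 * ((y1 - d) / (g - x1))) * (g - x1) = d * (g - x1) + g * (y1 - d).
    field; apply: lt0r_neq0; lra.
  rewrite /A /B in h1 *; lra.
have hc' : (g - xk) * A <= (yk - d) * B by rewrite /A /B; lra.
have key : (g - xk) * (D - d) <= g * (yk - d).
  rewrite -(ler_pM2r B0).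
  have h1 : (g - xk) * (D - d) * B <= (g - xk) * (g * A).
    rewrite -mulrA; apply: ler_wpM2l; lra.
  have h2 : (g - xk) * (g * A) <= g * ((yk - d) * B).
    rewrite mulrCA; apply: ler_wpM2l; last lra.
    by rewrite /g ler0n.
  rewrite -mulrA; lra.
have Dd : 0 < D - d by lra.
have hlp' : lp * (D - d) < g by move: hlp; rewrite ltr_pdivlMr.
have x10 : 0 <= x1 by rewrite /x1 ler0n.
have g0 : 0 < g by lra.
case: (posnP (nv k)) => hn.
  have ek1 : k = 1%N.
    apply/eqP; rewrite eqn_leq k1 andbT; rewrite leqNgt; apply/negP => hk.
    have [h _] := vmono hNP (leqnn 1) hk ks; by rewrite hn in h.
  have xk00 : xk = 0 by rewrite /xk hn.
  have yD : D <= yk.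
    rewrite xk00 subr0 in key; rewrite -(ler_pM2l g0); lra.
  have yneq : yk != D.
    apply/eqP; rewrite /yk /D => /eqP; rewrite eqr_nat => /eqP hy.
    by apply: hne; rewrite -ek1 hn hy.
  have : D < yk by rewrite lt_neqAle eq_sym yneq yD.
  rewrite xk00 add0r => hlt; apply: mulr_gt0 => //; lra.
have xkp : 0 < xk by rewrite /xk ltr0n.
rewrite -(pmulr_rgt0 _ g0).
have : g * (xk + lp * (yk - D)) = xk * g + lp * (g * (yk - d)) - lp * (g * (D - d)).
  ring.
move=> ->.
have h3 : lp * ((g - xk) * (D - d)) <= lp * (g * (yk - d)) by apply: ler_wpM2l; lra.
have h4 : 0 < xk * (g - lp * (D - d)) by apply: mulr_gt0; lra.
have : lp * ((g - xk) * (D - d)) - lp * (g * (D - d)) = - (xk * (lp * (D - d))) by ring.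
have : xk * (g - lp * (D - d)) = xk * g - xk * (lp * (D - d)) by ring.
lra.
Qed.

End P4.
Section Aux.
Variable R : realType.
Implicit Types (i j lp W Z mu th lr lq M la lz lpz D dd lw l Th : R).

Lemma aux_sum5 (t1 t2 t3 t4 : R) : 0 <= t1 -> 0 <= t2 -> 0 <= t3 -> 0 <= t4 ->
  [/\ t1 <= t1 + t2 + t3 + t4 + 1, t2 <= t1 + t2 + t3 + t4 + 1,
      t3 <= t1 + t2 + t3 + t4 + 1, t4 <= t1 + t2 + t3 + t4 + 1 &
      1 <= t1 + t2 + t3 + t4 + 1].
Proof. move=> *; split; lra. Qed.

Lemma aux1 i j lp W Z : i * W <= lp * (i * Z) -> (i + lp * j) * W <= lp * (i * Z + j * W).
Proof. move=> h; lra. Qed.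

Lemma aux2 i j Z W mu th lr : i * - lr <= i * ((1 - th) * Z) -> j * - lr <= j * ((1 - th) * W) ->
  mu * W <= th * (i * Z + j * W) -> i * - Z + j * - W <= - (mu * W) + (i * lr + j * lr).
Proof. move=> *; lra. Qed.

Lemma aux3 lq M mu (mu' : R) W : lq <= - (mu * W) + M -> M <= (mu - mu') * W -> mu' * W <= - lq.
Proof. move=> *; lra. Qed.

Lemma aux4 la lz lpz D dd : la + D * lz <= lpz -> - la <= (dd - D) * - lz -> - lpz <= dd * - lz.
Proof. move=> *; lra. Qed.

Lemma aux5 lw lz lr lp l Th : lp * - lz < - lw -> (lp - l) * Th <= (lp - l) * - lz ->
  - lr <= (lp - l) * Th -> lw < lr + l * lz.
Proof. move=> *; lra. Qed.

Lemma bernoulli (h : R) k : 0 <= h -> 1 + k%:R * h <= (1 + h) ^+ k.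
Proof.
move=> h0; elim: k => [|k IH]; first by rewrite mul0r addr0 expr0.
rewrite exprS -natr1.
have : (1 + h) * (1 + k%:R * h) <= (1 + h) * (1 + h) ^+ k by apply: ler_wpM2l => //; lra.
have : 0 <= k%:R * h * h by apply: mulr_ge0 => //; apply: mulr_ge0 => //; rewrite ler0n.
move=> h1 h2; apply: le_trans h2; nra.
Qed.

Lemma growth (Wf Zf : nat -> R) (N : nat) (mu' dd lp : R) :
  0 < dd -> dd < mu' -> 0 < Wf N -> 0 < lp ->
  (forall n, (N <= n)%N -> mu' * Wf n <= Wf n.+1 /\ Zf n.+1 <= dd * Zf n) ->
  (forall n, (N <= n)%N -> Wf n <= lp * Zf n) -> False.
Proof.
move=> dd0 ddm W0 lp0 hs hle.
have mu0 : 0 <= mu' by apply: ltW; apply: lt_trans ddm.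
have hk k : mu' ^+ k * Wf N <= Wf (N + k)%N /\ Zf (N + k)%N <= dd ^+ k * Zf N.
  elim: k => [|k [IH1 IH2]]; first by rewrite !expr0 !mul1r addn0.
  have [s1 s2] := hs (N + k)%N (leq_addr _ _).
  rewrite addnS !exprS -!mulrA; split.
    apply: le_trans s1; exact: ler_wpM2l.
  apply: le_trans s2 _; apply: ler_wpM2l => //; exact: ltW.
pose lam := mu' / dd.
have lam1 : 0 < lam - 1 by rewrite subr_gt0 /lam ltr_pdivlMr // mul1r.
have lamdd : lam * dd = mu' by rewrite /lam divfK // lt0r_neq0.
have [k hkk] := nat_gt (lp * Zf N / (Wf N * (lam - 1))).
have [h1 h2] := hk k.
have h3 := hle (N + k)%N (leq_addr _ _).
have h4 : mu' ^+ k * Wf N <= lp * (dd ^+ k * Zf N).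
  apply: le_trans h1 (le_trans h3 _); by rewrite ler_pM2l.
have ddk : 0 < dd ^+ k by exact: exprn_gt0.
have e1 : mu' ^+ k * Wf N = dd ^+ k * (lam ^+ k * Wf N) by rewrite -lamdd exprMn; ring.
have e2 : lp * (dd ^+ k * Zf N) = dd ^+ k * (lp * Zf N) by ring.
rewrite e1 e2 ler_pM2l // in h4.
have hb := bernoulli k (ltW lam1).
have el : 1 + (lam - 1) = lam by ring.
rewrite el in hb.
have h5 : (1 + k%:R * (lam - 1)) * Wf N <= lp * Zf N.
  apply: le_trans h4; apply: ler_wpM2r => //; exact: ltW.
rewrite ltr_pdivrMr ?mulr_gt0 // in hkk.
move: h5 hkk W0; clear; move=> h5 hkk W0; lra.
Qed.

End Aux.
Section P5.
Variable R : realType.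
Local Notation C := (R[i]).
Variables (DZ : C -> Prop) (p : C -> C) (q : C -> C -> C) (ca : nat -> C) (a : C)
  (dl : nat) (b : nat -> nat -> C).
Hypothesis hDZ : exists2 rD : R, 0 < rD & forall z, cabs z < rD -> DZ z.
Hypothesis hp : forall z, DZ z -> pseries1 ca p z.
Hypothesis hca : forall k, (k < dl)%N -> ca k = 0.
Hypothesis hcad : ca dl = a.
Hypothesis ha : a != 0.
Hypothesis hdl : (2 <= dl)%N.
Hypothesis hq : forall z w, DZ z -> pseries2 b q z w.
Hypothesis hb00 : b 0%N 0%N = 0.
Hypothesis hb01 : b 0%N 1%N = 0.

Lemma sum_if_eq N m (X : C) : (m < N)%N ->
  \sum_(k < N) (if (k : nat) == m then X else 0) = X.
Proof.
elim: N => // N IH; rewrite ltnS leq_eqVlt => /orP [/eqP ->|hm].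
  rewrite big_ord_recr /= eqxx big1 ?add0r // => k _.
  by rewrite (ltn_eqF (ltn_ord k)).
rewrite big_ord_recr /= IH // (gtn_eqF hm) addr0 //.
Qed.

Lemma cabs_realC (x : R) : 0 <= x -> cabs (Complex x 0) = x.
Proof. by move=> x0; rewrite cabs_real ger0_norm. Qed.

Lemma setup : exists rho1 : R, exists K1 : R, exists M2 : R,
  [/\ 0 < rho1, rho1 <= 2^-1, 0 < K1, 0 < M2 & [/\
   (forall z, cabs z <= rho1 -> DZ z),
   (forall z, cabs z <= rho1 -> cabs (p z - a * z ^+ dl) <= K1 * cabs z ^+ dl.+1) &
   (forall z w (E : R), cabs z <= rho1 -> 0 <= E ->
      (forall i j, b i j != 0 -> cabs z ^+ i * cabs w ^+ j <= E * (rho1 ^+ i * rho1 ^+ j)) ->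
      cabs (q z w) <= E * M2)]].
Proof.
have [rD rD0 hrD] := hDZ.
pose rho1 := Num.min (rD / 2) 2^-1.
have r10 : 0 < rho1 by rewrite lt_min divr_gt0 //= invr_gt0.
have r1h : rho1 <= 2^-1 by rewrite ge_min lexx orbT.
have r1D : rho1 < rD by apply: le_lt_trans (_ : rD / 2 < rD); [rewrite ge_min lexx | lra].
have inD z : cabs z <= rho1 -> DZ z by move=> hz; apply: hrD; apply: le_lt_trans r1D.
pose z1 : C := Complex rho1 0.
have cz1 : cabs z1 = rho1 by rewrite cabs_realC // ltW.
have Dz1 : DZ z1 by apply: inD; rewrite cz1.
have [[M1 hM1] _] := hp Dz1.
have [[M2 hM2] _] := hq z1 Dz1.
rewrite cz1 in hM1 hM2.
have M10 : 0 <= M1 by have := hM1 0%N; rewrite big_ord0.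
have M20 : 0 <= M2 by have := hM2 0%N; rewrite big_ord0.
exists rho1, (M1 / rho1 ^+ dl.+1 + 1), (M2 + 1); split => //; last split => //.
- by apply: ltr_pwDr => //; apply: divr_ge0 => //; apply: exprn_ge0; apply: ltW.
- lra.
- move=> z hz.
  pose c k := if k == dl then 0 else ca k.
  pose u := cabs z / rho1.
  have u0 : 0 <= u by apply: divr_ge0; [exact: cabs_ge0 | exact: ltW].
  have u1 : u <= 1 by rewrite /u ler_pdivrMr // mul1r.
  have dk0 k : 0 <= u ^+ dl.+1 * (cabs (ca k) * rho1 ^+ k).
    apply: mulr_ge0; first exact: exprn_ge0.
    apply: mulr_ge0; first exact: cabs_ge0.
    apply: exprn_ge0; exact: ltW.
  have hb : cabs (p z - a * z ^+ dl) <= u ^+ dl.+1 * M1.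
    apply: (@series1_bound _ c z _ (fun k => cabs (ca k) * rho1 ^+ k)) => //.
    + move=> eps eps0; have [_ hc] := hp (inD _ hz).
      have [N0 hN0] := hc eps eps0.
      exists (maxn N0 dl.+1) => N; rewrite geq_max => /andP [h1 h2].
      have -> : p z - a * z ^+ dl - \sum_(k < N) c k * z ^+ k = p z - \sum_(k < N) ca k * z ^+ k.
        have -> : \sum_(k < N) ca k * z ^+ k = \sum_(k < N) c k * z ^+ k + \sum_(k < N) (if (k : nat) == dl then a * z ^+ dl else 0).
          rewrite -big_split /=; apply: eq_bigr => k _; rewrite /c.
          by case: eqP => [->|]; rewrite ?hcad ?mul0r ?add0r ?addr0.
        by rewrite sum_if_eq //; ring.
      exact: hN0.
    + by apply: exprn_ge0.
    + move=> k; rewrite /c; case: eqP => [_|hk].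
        rewrite cabs0 mul0r; exact: dk0.
      case: (ltnP k dl) => hk2.
        by rewrite hca // cabs0 !mul0r mulr0.
      have hk3 : (dl.+1 <= k)%N by rewrite ltn_neqAle hk2 andbT; apply/eqP => e; apply: hk.
      rewrite mulrCA; apply: ler_wpM2l; first exact: cabs_ge0.
      have -> : cabs z = u * rho1 by rewrite /u divfK // lt0r_neq0.
      rewrite exprMn; apply: ler_wpM2r; first by apply: exprn_ge0; apply: ltW.
      exact: ler_wiXn2l.
  apply: le_trans hb _.
  have -> : u ^+ dl.+1 * M1 = M1 / rho1 ^+ dl.+1 * cabs z ^+ dl.+1.
    by rewrite /u expr_div_n; field; apply: expf_neq0; apply: lt0r_neq0.
  rewrite mulrDl mul1r lerDl; apply: exprn_ge0; exact: cabs_ge0.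
- move=> z w E hz E0 hE.
  have hb : cabs (q z w) <= E * M2.
    apply: (@series2_bound _ b z w _ (fun i j => cabs (b i j) * rho1 ^+ i * rho1 ^+ j)) => //.
      by have [_ hc] := hq w (inD _ hz).
    move=> i j; case: (eqVneq (b i j) 0) => [->|hbij].
      by rewrite cabs0 !mul0r mulr0.
    rewrite -!mulrA (mulrCA E); apply: ler_wpM2l; first exact: cabs_ge0.
    exact: hE.
  apply: le_trans hb _; apply: ler_wpM2l => //; lra.
Qed.


Lemma powR_le1 (x l : R) : 0 <= x -> x <= 1 -> 0 <= l -> powR x l <= 1.
Proof.
move=> x0 x1 l0; rewrite /powR; case: eqP => [_|hx].
  by case: (l == 0); rewrite ?ler01 ?lexx.
rewrite expR_le1; apply: mulr_ge0_le0 => //; exact: ln_le0.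
Qed.

Lemma pow2_ge (N : nat) : (N%:R : R) < 2 ^+ N.
Proof.
elim: N => [|N IH]; first by rewrite expr0 ltr01.
rewrite exprS -natr1; have : (1 : R) <= 2 ^+ N by apply: exprn_ege1; lra.
lra.
Qed.

Lemma half_small (c eps : R) : 0 <= c -> 0 < eps -> exists N : nat, c * 2^-1 ^+ N < eps.
Proof.
move=> c0 e0; have [N hN] := nat_gt (c / eps).
have h2pos : (0:R) < 2 ^+ N by apply: exprn_gt0; lra.
exists N; rewrite exprVn ltr_pdivrMr //.
rewrite ltr_pdivrMr // in hN.
have h2 := pow2_ge N.
apply: lt_le_trans hN _; rewrite mulrC; apply: ler_wpM2l; [exact: ltW | exact: ltW].
Qed.

Lemma minle1 (x y : R) : Num.min x y <= x. Proof. by rewrite ge_min lexx. Qed.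
Lemma minle2 (x y : R) : Num.min x y <= y. Proof. by rewrite ge_min lexx orbT. Qed.

Lemma pow_mono (x y : R) n : 0 <= x -> x <= y -> x ^+ n <= y ^+ n.
Proof.
move=> x0 xy; elim: n => [|n IH]; first by rewrite !expr0.
rewrite !exprS; apply: ler_pM => //; exact: exprn_ge0.
Qed.

Lemma uv_bound (u v : R) i j : 0 <= u -> u <= 1 -> 0 <= v -> v <= 1 ->
  (0 < i)%N \/ (2 <= j)%N -> u ^+ i * v ^+ j <= u + v ^+ 2.
Proof.
move=> u0 u1 v0 v1 hij.
have ui : u ^+ i <= 1 by exact: exprn_ile1.
have vj : v ^+ j <= 1 by exact: exprn_ile1.
have ui0 : 0 <= u ^+ i by exact: exprn_ge0.
have vj0 : 0 <= v ^+ j by exact: exprn_ge0.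
have v20 : 0 <= v ^+ 2 by exact: exprn_ge0.
case: hij => h.
  have : u ^+ i <= u ^+ 1 by exact: ler_wiXn2l.
  rewrite expr1 => hu.
  have : u ^+ i * v ^+ j <= u ^+ i by rewrite -[X in _ <= X]mulr1; apply: ler_wpM2l.
  move=> h'; lra.
have : v ^+ j <= v ^+ 2 by exact: ler_wiXn2l.
have : u ^+ i * v ^+ j <= v ^+ j by rewrite -[X in _ <= X]mul1r; apply: ler_wpM2r.
move=> h1 h2; lra.
Qed.

Lemma iter_skew1 n (y : C * C) : (iter n (Defs.skew p q) y).1 = iter n p y.1.
Proof. elim: n => [|n IH] //; by rewrite !iterS /Defs.skew /= IH. Qed.

Lemma sub_dir : exists2 r0 : R, 0 < r0 & forall r l x, 0 < r -> r < r0 -> 0 < l ->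
  Afl DZ p q r l x -> basin2 DZ p q x /\ ~ Ez DZ p q x.
Proof.
have [rho1 [K1 [M2 [r10 r1h K10 M20 [inD pest qest]]]]] := setup.
pose f := Defs.skew p q.
have A0 : 0 < cabs a by apply: cabs_gt0.
have p0 : p 0 = 0.
  have h0 : cabs (0:C) <= rho1 by rewrite cabs0 ltW.
  have := pest 0 h0.
  have ez : (0:C) ^+ dl = 0 by rewrite expr0n; case: dl hdl.
  have er : (0:R) ^+ dl.+1 = 0 by rewrite expr0n.
  rewrite ez cabs0 er mulr0 mulr0 subr0 => h.
  apply: cabs_eq0; apply/eqP; rewrite eq_le cabs_ge0 andbT //.
pose etap := Num.min rho1 (cabs a / (2 * K1)).
have etap0 : 0 < etap by rewrite lt_min r10 /= divr_gt0 // mulr_gt0.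
have plow z : cabs z <= etap -> cabs a / 2 * cabs z ^+ dl <= cabs (p z) /\ cabs (p z) <= 3 * cabs a / 2 * cabs z ^+ dl.
  move=> hz.
  have hz1 : cabs z <= rho1 by apply: le_trans hz _; rewrite ge_min lexx.
  have hz2 : cabs z <= cabs a / (2 * K1) by apply: le_trans hz _; rewrite ge_min lexx orbT.
  have := pest z hz1; rewrite exprS mulrA => h.
  have hK : K1 * cabs z <= cabs a / 2.
    have h' := ler_wpM2l (ltW K10) hz2.
    have e : K1 * (cabs a / (2 * K1)) = cabs a / 2 by field; exact: lt0r_neq0.
    by rewrite e in h'.
  have hzd : 0 <= cabs z ^+ dl by apply: exprn_ge0; exact: cabs_ge0.
  have h2 : cabs (p z - a * z ^+ dl) <= cabs a / 2 * cabs z ^+ dl.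
    by apply: le_trans h _; apply: ler_wpM2r.
  have e1 : cabs (a * z ^+ dl) = cabs a * cabs z ^+ dl by rewrite cabsM cabsX.
  have t1 := cabsB (a * z ^+ dl) (p z).
  have t2 := cabsD (p z - a * z ^+ dl) (a * z ^+ dl).
  rewrite subrK in t2.
  have t3 : cabs (a * z ^+ dl - p z) = cabs (p z - a * z ^+ dl) by rewrite -cabsN opprB.
  rewrite e1 t3 in t1; rewrite e1 in t2.
  split; lra.
pose Bq := M2 / rho1; pose Cq := M2 / rho1 ^+ 2.
have Bq0 : 0 < Bq by rewrite divr_gt0.
have Cq0 : 0 < Cq by rewrite divr_gt0 // exprn_gt0.
have qquad z w : cabs z <= rho1 -> cabs w <= rho1 -> cabs (q z w) <= Bq * cabs z + Cq * cabs w ^+ 2.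
  move=> hz hw.
  pose u := cabs z / rho1; pose v := cabs w / rho1.
  have u0 : 0 <= u by apply: divr_ge0; [exact: cabs_ge0 | exact: ltW].
  have v0 : 0 <= v by apply: divr_ge0; [exact: cabs_ge0 | exact: ltW].
  have u1 : u <= 1 by rewrite /u ler_pdivrMr // mul1r.
  have v1 : v <= 1 by rewrite /v ler_pdivrMr // mul1r.
  have h := qest z w (u + v ^+ 2) hz (addr_ge0 u0 (exprn_ge0 _ v0)).
  have -> : Bq * cabs z + Cq * cabs w ^+ 2 = (u + v ^+ 2) * M2.
    rewrite /Bq /Cq /u /v; field; exact: lt0r_neq0.
  apply: h => i j hb.
  have ez : cabs z ^+ i = u ^+ i * rho1 ^+ i by rewrite -exprMn /u divfK // lt0r_neq0.
  have ew : cabs w ^+ j = v ^+ j * rho1 ^+ j by rewrite -exprMn /v divfK // lt0r_neq0.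
  rewrite ez ew mulrACA; apply: ler_wpM2r; first by apply: mulr_ge0; apply: exprn_ge0; apply: ltW.
  apply: uv_bound => //.
  case: (posnP i) => hi; last by left.
  right; move: hb; clear ez ew; case: j => [|[|j]] //; rewrite hi; [by rewrite hb00 eqxx | by rewrite hb01 eqxx].
pose sig := Num.min rho1 (1 / (4 * Cq)).
have sig0 : 0 < sig by rewrite lt_min r10 /= divr_gt0 // mulr_gt0.
have sigr : sig <= rho1 by rewrite ge_min lexx.
have sigC : Cq * sig <= 4^-1.
  have h : sig <= 1 / (4 * Cq) by rewrite ge_min lexx orbT.
  have h' := ler_wpM2l (ltW Cq0) h.
  have e : Cq * (1 / (4 * Cq)) = 4^-1 by field; exact: lt0r_neq0.
  by rewrite e in h'.
pose eta := Num.min etap (Num.min (1 / (6 * cabs a)) (Num.min (sig / (2 * Bq)) sig)).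
have eta0 : 0 < eta.
  have e1 : 0 < 1 / (6 * cabs a) by apply: divr_gt0 => //; apply: mulr_gt0.
  have e2 : 0 < sig / (2 * Bq) by apply: divr_gt0 => //; apply: mulr_gt0.
  rewrite /eta lt_min; apply/andP; split => //; rewrite lt_min; apply/andP; split => //.
  by rewrite lt_min; apply/andP; split.
have etap_ : eta <= etap := minle1 _ _.
have etaA : eta <= 1 / (6 * cabs a) := le_trans (minle2 _ _) (minle1 _ _).
have etaB : eta <= sig / (2 * Bq) := le_trans (minle2 _ _) (le_trans (minle2 _ _) (minle1 _ _)).
have etas : eta <= sig := le_trans (minle2 _ _) (le_trans (minle2 _ _) (minle2 _ _)).
have etar : eta <= rho1 by apply: le_trans etas sigr.
have eta1 : eta <= 2^-1 by apply: le_trans etar r1h.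
have etaA' : cabs a * eta <= 6^-1.
  have h' := ler_wpM2l (ltW A0) etaA.
  have e : cabs a * (1 / (6 * cabs a)) = 6^-1 by field; exact: lt0r_neq0.
  by rewrite e in h'.
have etaB' : Bq * eta <= sig / 2.
  have h' := ler_wpM2l (ltW Bq0) etaB.
  have e : Bq * (sig / (2 * Bq)) = sig / 2 by field; exact: lt0r_neq0.
  by rewrite e in h'.
pose Reg (y : C * C) := cabs y.1 <= eta /\ cabs y.2 <= sig.
have step y : Reg y -> [/\ cabs (p y.1) <= cabs y.1 / 4,
    cabs (q y.1 y.2) <= Bq * cabs y.1 + cabs y.2 / 4, Reg (f y),
    (y.1 != 0 -> p y.1 != 0) & DZ y.1].
  case=> hz hw.
  have z0 := cabs_ge0 y.1; have w0 := cabs_ge0 y.2.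
  have [pl pu] := plow y.1 (le_trans hz etap_).
  have hzd : cabs y.1 ^+ dl <= cabs y.1 ^+ 2.
    by apply: ler_wiXn2l => //; apply: le_trans hz _; lra.
  have hz2 : cabs y.1 ^+ 2 <= eta * cabs y.1 by rewrite expr2 ler_wpM2r.
  have hp4 : cabs (p y.1) <= cabs y.1 / 4.
    apply: le_trans pu _.
    have h1 : 3 * cabs a / 2 * cabs y.1 ^+ dl <= 3 * cabs a / 2 * (eta * cabs y.1).
      apply: ler_wpM2l; first by apply: divr_ge0 => //; apply: mulr_ge0 => //; apply: ltW.
      exact: le_trans hzd hz2.
    apply: le_trans h1 _.
    have : cabs a * eta * cabs y.1 <= 6^-1 * cabs y.1 by apply: ler_wpM2r.
    move=> h2; rewrite -[X in X <= _](_ : 3 / 2 * (cabs a * eta * cabs y.1) = _); last by ring.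
    lra.
  have hq4 : cabs (q y.1 y.2) <= Bq * cabs y.1 + cabs y.2 / 4.
    apply: le_trans (qquad _ _ (le_trans hz etar) (le_trans hw sigr)) _.
    apply: lerD => //.
    have : cabs y.2 ^+ 2 <= sig * cabs y.2 by rewrite expr2 ler_wpM2r.
    move=> h; have h' := ler_wpM2l (ltW Cq0) h.
    apply: le_trans h' _; rewrite mulrA.
    have : Cq * sig * cabs y.2 <= 4^-1 * cabs y.2 by apply: ler_wpM2r.
    lra.
  split => //.
  - split => /=; first by apply: le_trans hp4 _; lra.
    apply: le_trans hq4 _.
    have : Bq * cabs y.1 <= Bq * eta by apply: ler_wpM2l => //; apply: ltW.
    lra.
  - move=> hz0; apply/eqP => hp0.
    have : 0 < cabs a / 2 * cabs y.1 ^+ dl.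
      apply: mulr_gt0; first lra.
      by apply: exprn_gt0; apply: cabs_gt0.
    rewrite hp0 cabs0 in pl; lra.
  - by apply: inD; apply: le_trans hz etar.
pose K := sig + 4 * Bq * eta.
have orbit y : Reg y -> forall n, [/\ Reg (iter n f y),
    cabs (iter n f y).1 <= eta * 4^-1 ^+ n & cabs (iter n f y).2 <= K * 2^-1 ^+ n].
  move=> hy; elim=> [|n [hR h1 h2]].
    have hBe : 0 <= Bq * eta by apply: mulr_ge0; apply: ltW.
    by rewrite !expr0 !mulr1; case: hy => h1 h2; split => //; rewrite /K; lra.
  have [s1 s2 s3 _ _] := step _ hR.
  rewrite iterS; split => //.
    rewrite /f /Defs.skew /= exprS; apply: le_trans s1 _.
    have : cabs (iter n f y).1 / 4 <= eta * 4^-1 ^+ n / 4 by lra.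
    move=> h; apply: le_trans h _; rewrite mulrCA mulrC; lra.
  rewrite /f /Defs.skew /= exprS; apply: le_trans s2 _.
  have h4 : (4^-1 : R) ^+ n <= 2^-1 ^+ n by apply: pow_mono; lra.
  have hp2 : (0 : R) <= 2^-1 ^+ n by apply: exprn_ge0; lra.
  have : Bq * cabs (iter n f y).1 <= Bq * (eta * 2^-1 ^+ n).
    apply: ler_wpM2l; first exact: ltW.
    apply: le_trans h1 _; apply: ler_wpM2l => //; exact: ltW.
  move=> h3; rewrite /K in h2 *.
  have e1 : Bq * (eta * 2^-1 ^+ n) = (Bq * eta) * 2^-1 ^+ n by ring.
  rewrite e1 in h3.
  have : (sig + 4 * Bq * eta) * (2^-1 * 2^-1 ^+ n) = (sig + 4 * Bq * eta) * 2^-1 ^+ n / 2 by ring.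
  move=> ->.
  have hs : 0 <= sig * 2^-1 ^+ n by apply: mulr_ge0 => //; exact: ltW.
  have hB : 0 <= Bq * eta * 2^-1 ^+ n by apply: mulr_ge0 => //; apply: mulr_ge0; apply: ltW.
  have e2 : (sig + 4 * Bq * eta) * 2^-1 ^+ n = sig * 2^-1 ^+ n + 4 * (Bq * eta * 2^-1 ^+ n) by ring.
  rewrite e2 in h2 *; lra.
have nz_orbit y : Reg y -> y.1 != 0 -> forall n, (iter n f y).1 != 0.
  move=> hy hy1; elim=> // n IH; have [hR _ _] := orbit y hy n.
  have [_ _ _ s4 _] := step _ hR.
  by rewrite iterS /f /Defs.skew /=; apply: s4.
have iter0 n : iter n p 0 = 0 by elim: n => //= n ->.
exists eta => // r l x r0 rlt l0 [n [hD hU]].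
case: hU => hz hw.
have hz0 : (iter n f x).1 != 0.
  apply/eqP => e; move: hw; rewrite e cabs0 powR0 ?mulr0; last exact: lt0r_neq0.
  by move=> h; have := cabs_ge0 (iter n f x).2; lra.
have hpow : powR (cabs (iter n f x).1) l <= 1.
  apply: powR_le1; [exact: cabs_ge0 | lra | exact: ltW].
have hR : Reg (iter n f x).
  split; first lra.
  have : r * powR (cabs (iter n f x).1) l <= r by rewrite -[X in _ <= X]mulr1; apply: ler_wpM2l => //; exact: ltW.
  lra.
have itn m : iter (m + n) f x = iter m f (iter n f x) by rewrite iterD.
split.
  split.
    move=> k; case: (leqP k n) => hk; first exact: hD.
    have := itn (k - n)%N; rewrite subnK ?(ltnW hk) // => ->.
    by have [hR' _ _] := orbit _ hR (k - n)%N; have [_ _ _ _] := step _ hR'.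
  move=> eps eps0.
  have hBe : 0 <= Bq * eta by apply: mulr_ge0; apply: ltW.
  have hKe : 0 <= K + eta by rewrite /K; lra.
  have [N hN] := half_small hKe eps0.
  exists (N + n)%N => k hk.
  have := itn (k - n)%N; rewrite subnK ?(leq_trans (leq_addl _ _) hk) // => ->.
  have [_ h1 h2] := orbit _ hR (k - n)%N.
  have hkN : (N <= k - n)%N by rewrite leq_subRL ?(leq_trans (leq_addl _ _) hk) // addnC.
  have m1 : (2^-1 : R) ^+ (k - n) <= 2^-1 ^+ N by apply: ler_wiXn2l => //; lra.
  have m2 : (4^-1 : R) ^+ (k - n) <= 2^-1 ^+ (k - n) by apply: pow_mono; lra.
  have hp2 : (0 : R) <= 2^-1 ^+ N by apply: exprn_ge0; lra.
  have hK0 : 0 <= K by rewrite /K; lra.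
  have e1 : eta * 4^-1 ^+ (k - n) <= eta * 2^-1 ^+ N.
    apply: ler_wpM2l; [exact: ltW | exact: le_trans m2 m1].
  have e2 : K * 2^-1 ^+ (k - n) <= K * 2^-1 ^+ N by apply: ler_wpM2l.
  have e3 : (K + eta) * 2^-1 ^+ N = K * 2^-1 ^+ N + eta * 2^-1 ^+ N by ring.
  have e4 : 0 <= K * 2^-1 ^+ N by apply: mulr_ge0.
  have e5 : 0 <= eta * 2^-1 ^+ N by apply: mulr_ge0 => //; exact: ltW.
  rewrite e3 in hN; split; lra.
move=> [n' [hD' hz']].
case: (leqP n' n) => hnn.
  have e : iter n f x = iter (n - n') f (iter n' f x) by rewrite -iterD subnK.
  move/eqP: hz0; apply; rewrite e iter_skew1 hz'; exact: iter0.
have := itn (n' - n)%N; rewrite subnK ?(ltnW hnn) // => e.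
have := nz_orbit _ hR hz0 (n' - n)%N; rewrite -e hz'.
by rewrite eqxx.
Qed.
End P5.
Section P7.
Variable R : realType.
Local Notation C := (R[i]).
Variables (DZ : C -> Prop) (p : C -> C) (q : C -> C -> C) (ca : nat -> C) (a : C)
  (dl : nat) (b : nat -> nat -> C).
Hypothesis hDZ : exists2 rD : R, 0 < rD & forall z, cabs z < rD -> DZ z.
Hypothesis hp : forall z, DZ z -> pseries1 ca p z.
Hypothesis hca : forall k, (k < dl)%N -> ca k = 0.
Hypothesis hcad : ca dl = a.
Hypothesis ha : a != 0.
Hypothesis hdl : (2 <= dl)%N.
Hypothesis hq : forall z w, DZ z -> pseries2 b q z w.
Hypothesis hb00 : b 0%N 0%N = 0.
Hypothesis hb01 : b 0%N 1%N = 0.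

Lemma lnexp_le (x y : R) : 0 < x -> x <= expR y -> ln x <= y.
Proof. by move=> x0 h; rewrite -[y]expRK ler_ln // posrE expR_gt0. Qed.

Lemma expln (x : R) : 0 < x -> expR (ln x) = x.
Proof. by move=> x0; rewrite lnK. Qed.

Lemma ln_le (x y : R) : 0 < x -> x <= y -> ln x <= ln y.
Proof. by move=> x0 xy; rewrite ler_ln ?posrE //; exact: lt_le_trans x0 xy. Qed.



Lemma sup_dir r l lp : 0 < r -> r < 1 -> 0 < l -> l < lp ->
  (exists2 e : R, 0 < e & forall i j, b i j != 0 -> dl%:R * lp + e <= i%:R + lp * j%:R) ->
  forall x, basin2 DZ p q x -> ~ Ez DZ p q x -> Afl DZ p q r l x.
Proof.
move=> r0 r1 l0 llp [e e0 he] x hB hE.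
have r2 : r / 2 < r by lra.
have [rho1 [K1 [M2 [r10 r1h K10 M20 [inD pest qest]]]]] := setup hDZ hp hca hcad hq.
pose f := Defs.skew p q.
have A0 : 0 < cabs a by apply: cabs_gt0.
pose etap := Num.min rho1 (cabs a / (2 * K1)).
have etap0 : 0 < etap by rewrite lt_min r10 /= divr_gt0 // mulr_gt0.
have plow z : cabs z <= etap -> cabs a / 2 * cabs z ^+ dl <= cabs (p z).
  move=> hz.
  have hz1 : cabs z <= rho1 by apply: le_trans hz _; rewrite ge_min lexx.
  have hz2 : cabs z <= cabs a / (2 * K1) by apply: le_trans hz _; rewrite ge_min lexx orbT.
  have := pest z hz1; rewrite exprS mulrA => h.
  have hK : K1 * cabs z <= cabs a / 2.
    have h' := ler_wpM2l (ltW K10) hz2.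
    have e' : K1 * (cabs a / (2 * K1)) = cabs a / 2 by field; exact: lt0r_neq0.
    by rewrite e' in h'.
  have hzd : 0 <= cabs z ^+ dl by apply: exprn_ge0; exact: cabs_ge0.
  have h2 : cabs (p z - a * z ^+ dl) <= cabs a / 2 * cabs z ^+ dl.
    by apply: le_trans h _; apply: ler_wpM2r.
  have e1 : cabs (a * z ^+ dl) = cabs a * cabs z ^+ dl by rewrite cabsM cabsX.
  have t1 := cabsB (a * z ^+ dl) (p z).
  have t3 : cabs (a * z ^+ dl - p z) = cabs (p z - a * z ^+ dl) by rewrite -cabsN opprB.
  rewrite e1 t3 in t1; lra.
have dl0 : (2 : R) <= dl%:R by rewrite (ler_nat R 2 dl).
pose kap := dl%:R + e / lp.
have lp0 : 0 < lp by lra.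
have elp : 0 < e / lp by apply: divr_gt0.
pose mu := (kap + dl%:R) / 2.
pose th := mu / kap.
pose mu' := (mu + dl%:R) / 2.
pose dd := (dl%:R + mu') / 2.
have kap0 : 0 < kap by rewrite /kap; lra.
have thk : th * kap = mu by rewrite /th divfK // lt0r_neq0.
have th1 : 0 < 1 - th.
  rewrite subr_gt0 /th ltr_pdivrMr // mul1r /mu /kap; lra.
have th0 : 0 <= th by rewrite /th divr_ge0 // /mu; lra.
have mmu : 0 < mu - mu' by rewrite /mu' /mu /kap; lra.
have ddd : 0 < dd - dl%:R by rewrite /dd /mu' /mu /kap; lra.
have dd0 : 0 < dd by lra.
have mudd : dd < mu' by rewrite /dd /mu' /mu /kap; lra.
have lpl : 0 < lp - l by lra.
pose Th := `|ln rho1| / (1 - th) + `|ln M2| / (mu - mu') + `|ln (cabs a / 2)| / (dd - dl%:R)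
   + `|ln r| / (lp - l) + 1.
have [S1 S2 S3 S4 S5] := aux_sum5 (divr_ge0 (normr_ge0 (ln rho1)) (ltW th1))
  (divr_ge0 (normr_ge0 (ln M2)) (ltW mmu)) (divr_ge0 (normr_ge0 (ln (cabs a / 2))) (ltW ddd))
  (divr_ge0 (normr_ge0 (ln r)) (ltW lpl)).
rewrite -/Th in S1 S2 S3 S4 S5.
have T1 : - ln rho1 <= (1 - th) * Th.
  move: S1; rewrite ler_pdivrMr // [Th * _]mulrC => h; apply: le_trans h; rewrite -normrN; exact: ler_norm.
have T2 : ln M2 <= (mu - mu') * Th.
  move: S2; rewrite ler_pdivrMr // [Th * _]mulrC => h; apply: le_trans h; exact: ler_norm.
have T3 : - ln (cabs a / 2) <= (dd - dl%:R) * Th.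
  move: S3; rewrite ler_pdivrMr // [Th * _]mulrC => h; apply: le_trans h; rewrite -normrN; exact: ler_norm.
have T4 : - ln r <= (lp - l) * Th.
  move: S4; rewrite ler_pdivrMr // [Th * _]mulrC => h; apply: le_trans h; rewrite -normrN; exact: ler_norm.
have T5 : 1 <= Th := S5.
pose rho := Num.min etap (Num.min (r / 2) (Num.min rho1 (expR (- Th)))).
have rho0 : 0 < rho.
  rewrite /rho lt_min; apply/andP; split => //; rewrite lt_min; apply/andP; split; first by apply: divr_gt0.
  by rewrite lt_min r10 expR_gt0.
have rhoe : rho <= etap := minle1 _ _.
have rhor : rho <= r / 2 := le_trans (minle2 _ _) (minle1 _ _).
have rho1' : rho <= rho1 := le_trans (minle2 _ _) (le_trans (minle2 _ _) (minle1 _ _)).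
have rhoT : rho <= expR (- Th) := le_trans (minle2 _ _) (le_trans (minle2 _ _) (minle2 _ _)).
have bigZ (z : C) : z != 0 -> cabs z <= rho -> Th <= - ln (cabs z).
  move=> hz hr; rewrite lerNr; apply: lnexp_le; first exact: cabs_gt0.
  exact: le_trans hr rhoT.
have keyq (z w : C) : z != 0 -> w != 0 -> q z w != 0 -> cabs z <= rho -> cabs w <= rho ->
    - ln (cabs w) <= lp * - ln (cabs z) -> mu' * - ln (cabs w) <= - ln (cabs (q z w)).
  move=> hz hw hqz hzr hwr hWZ.
  set Z := - ln (cabs z); set W := - ln (cabs w).
  have hZ : Th <= Z := bigZ z hz hzr.
  have hW : Th <= W := bigZ w hw hwr.
  have ez : cabs z = expR (- Z) by rewrite /Z opprK expln // cabs_gt0.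
  have ew : cabs w = expR (- W) by rewrite /W opprK expln // cabs_gt0.
  have er : rho1 = expR (ln rho1) by rewrite expln.
  have hqb : cabs (q z w) <= expR (- (mu * W)) * M2.
    apply: qest; [exact: le_trans hzr rho1' | exact: expR_ge0 |].
    move=> i j hb; have hij := he i j hb.
    rewrite ez ew er -!expRM_natl -!expRD ler_expR.
    have i0 : (0 : R) <= i%:R by rewrite ler0n.
    have j0 : (0 : R) <= j%:R by rewrite ler0n.
    have W0 : 0 <= W by apply: le_trans hW; apply: le_trans T5; exact: ler01.
    have ha1 : i%:R * W <= lp * (i%:R * Z).
      rewrite mulrCA; apply: ler_wpM2l => //.
    have hc1 : (dl%:R * lp + e) * W <= (i%:R + lp * j%:R) * W by apply: ler_wpM2r.
    have hk : lp * kap = dl%:R * lp + e by rewrite /kap; field; exact: lt0r_neq0.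
    have hX : lp * (kap * W) <= lp * (i%:R * Z + j%:R * W).
      rewrite mulrA hk; apply: le_trans hc1 _; exact: aux1.
    have hX' : kap * W <= i%:R * Z + j%:R * W by rewrite -(ler_pM2l lp0).
    have hd1 : i%:R * - ln rho1 <= i%:R * ((1 - th) * Z).
      apply: ler_wpM2l => //; apply: le_trans T1 _; apply: ler_wpM2l; [exact: ltW th1 | exact: hZ].
    have hd2 : j%:R * - ln rho1 <= j%:R * ((1 - th) * W).
      apply: ler_wpM2l => //; apply: le_trans T1 _; apply: ler_wpM2l; [exact: ltW th1 | exact: hW].
    have hth : th * (kap * W) <= th * (i%:R * Z + j%:R * W) by apply: ler_wpM2l.
    rewrite mulrA thk in hth.
    exact: aux2 hd1 hd2 hth.
  have hq0 : 0 < cabs (q z w) by apply: cabs_gt0.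
  have := lnexp_le hq0 (_ : cabs (q z w) <= expR (- (mu * W) + ln M2)).
  rewrite expRD expln //; move=> /(_ hqb) h.
  have : (mu - mu') * W >= ln M2.
    apply: le_trans T2 _; apply: ler_wpM2l; [exact: ltW mmu | exact: hW].
  exact: aux3.
have keyp (z : C) : z != 0 -> cabs z <= rho -> - ln (cabs (p z)) <= dd * - ln (cabs z).
  move=> hz hzr.
  have hpl := plow z (le_trans hzr rhoe).
  have hz0 := cabs_gt0 hz.
  have hpz : 0 < cabs (p z).
    apply: lt_le_trans hpl; apply: mulr_gt0; first by apply: divr_gt0.
    exact: exprn_gt0.
  have h1 : 0 < cabs a / 2 by apply: divr_gt0.
  have h2 : 0 < cabs z ^+ dl by exact: exprn_gt0.
  have h := ln_le (mulr_gt0 h1 h2) hpl.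
  rewrite lnM ?posrE // lnXn // in h.
  have hZ := bigZ z hz hzr.
  have : - ln (cabs a / 2) <= (dd - dl%:R) * - ln (cabs z).
    apply: le_trans T3 _; apply: ler_wpM2l; [exact: ltW ddd | exact: hZ].
  rewrite -[ln (cabs z) *+ dl]mulr_natl in h; exact: aux4.
have [hBD hBc] := hB.
have [N hN] := hBc rho rho0.
have hzn n : (iter n f x).1 != 0.
  apply/eqP => h0; apply: hE; exists n; split => // k _; exact: hBD.
have exitU n : (N <= n)%N -> ((iter n f x).2 = 0 \/
    lp * - ln (cabs (iter n f x).1) < - ln (cabs (iter n f x).2)) -> Afl DZ p q r l x.
  move=> hn hc; exists n; split; first by move=> k _; exact: hBD.
  have [hz1 hw1] := hN n hn.
  have cz0 : 0 < cabs (iter n f x).1 by exact: cabs_gt0.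
  have epow : powR (cabs (iter n f x).1) l = expR (l * ln (cabs (iter n f x).1)).
    by rewrite /powR (negbTE (lt0r_neq0 cz0)).
  split; first by apply: lt_le_trans hz1 _; apply: le_trans rhor _; apply: ltW.
  rewrite epow; case: (eqVneq (iter n f x).2 0) => [->|cw0].
    by rewrite cabs0; apply: mulr_gt0 => //; exact: expR_gt0.
  case: hc => [e'|hc]; first by rewrite e' eqxx in cw0.
  have er : r = expR (ln r) by rewrite expln.
  rewrite -(expln (cabs_gt0 cw0)) [X in _ < X * _]er -expRD ltr_expR.
  have hZ := bigZ _ (hzn n) (ltW hz1).
  have : (lp - l) * Th <= (lp - l) * - ln (cabs (iter n f x).1) by apply: ler_wpM2l; [exact: ltW lpl | exact: hZ].
  move=> hL; exact: aux5 hc hL T4.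
apply: Classical_Prop.NNPP => hno.
have hw n : (N <= n)%N -> (iter n f x).2 != 0.
  move=> hn; apply/eqP => e'; apply: hno; by apply: (exitU n hn); left.
have hle n : (N <= n)%N -> - ln (cabs (iter n f x).2) <= lp * - ln (cabs (iter n f x).1).
  move=> hn; rewrite leNgt; apply/negP => hlt; apply: hno; by apply: (exitU n hn); right.
have [hzN hwN] := hN N (leqnn _).
have WN : Th <= - ln (cabs (iter N f x).2) := bigZ _ (hw N (leqnn _)) (ltW hwN).
apply: (@growth _ (fun n => - ln (cabs (iter n f x).2)) (fun n => - ln (cabs (iter n f x).1)) N mu' dd lp) => //.
- by apply: lt_le_trans WN; apply: lt_le_trans T5; exact: ltr01.
- move=> n hn; have [hz1 hw1] := hN n hn.
  have e1 : (iter n.+1 f x).1 = p (iter n f x).1 by [].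
  have e2 : (iter n.+1 f x).2 = q (iter n f x).1 (iter n f x).2 by [].
  rewrite e1 e2; split.
    apply: keyq; [exact: hzn | exact: hw | rewrite -e2; exact: hw (leqW hn) | exact: ltW | exact: ltW | exact: hle].
  apply: keyp; [exact: hzn | exact: ltW].
Qed.
End P7.

Lemma minle1' (R : realType) (x y : R) : Num.min x y <= x. Proof. by rewrite ge_min lexx. Qed.
Lemma minle2' (R : realType) (x y : R) : Num.min x y <= y. Proof. by rewrite ge_min lexx orbT. Qed.

Theorem theorem2p3 (R : realType) (DZ : R[i] -> Prop)
    (p : R[i] -> R[i]) (q : R[i] -> R[i] -> R[i])
    (ca : nat -> R[i]) (a : R[i]) (delta : nat)
    (b : nat -> nat -> R[i])
    (s : nat) (nv mv : nat -> nat) :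
  admissible_domain DZ p ->
  (forall z, DZ z -> pseries1 ca p z) ->
  (forall k, (k < delta)%N -> ca k = 0) -> ca delta = a -> a != 0 -> (2 <= delta)%N ->
  (forall z w, DZ z -> pseries2 b q z w) ->
  b 0%N 0%N = 0 -> b 0%N 1%N = 0 ->
  NP_vertices b s nv mv -> (1 < s)%N ->
  (delta%:R <= T_last R s nv mv) ->
  exists r0 : R, 0 < r0 /\ forall r : R, 0 < r -> r < r0 ->
    ((delta <= mv s)%N ->
       forall l : R, 0 < l ->
         forall x, Afl DZ p q r l x <-> (basin2 DZ p q x /\ ~ Ez DZ p q x)) /\
    ((mv s < delta)%N -> (nv 1%N, mv 1%N) <> (0%N, delta) ->
       forall l : R, 0 < l -> l < (nv s)%:R / (delta%:R - (mv s)%:R) ->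
         forall x, Afl DZ p q r l x <-> (basin2 DZ p q x /\ ~ Ez DZ p q x)).
Proof.
move=> hadm hp hca hcad ha hdl hq hb00 hb01 hNP hs1 hT.
have hDZ : exists2 rD : R, 0 < rD & forall z, cabs z < rD -> DZ z.
  case: hadm => [hall | [Rd [Rd0 [hiff _]]]]; first by exists 1.
  by exists Rd => // z hz; apply/hiff.
have [r0 r00 hsub] := sub_dir hDZ hp hca hcad ha hdl hq hb00 hb01.
exists (Num.min r0 2^-1); split; first by rewrite lt_min r00 /= invr_gt0.
move=> r rpos rlt.
have rr0 : r < r0 := lt_le_trans rlt (minle1' _ _).
have r1 : r < 1 by have := lt_le_trans rlt (minle2' _ _); lra.
split.
- move=> hd l l0 x; split; first exact: hsub.
  move=> [hB hE].
  have lp0 : 0 < l + 1 by lra.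
  have [e e0 he] := support_gap hNP lp0 (ek_case1 hNP hs1 hd lp0).
  have hll : l < l + 1 by lra.
  have hg : exists2 e0 : R, 0 < e0 & forall i j, b i j != 0 -> delta%:R * (l + 1) + e0 <= i%:R + (l + 1) * j%:R.
    by exists e.
  exact: (@sup_dir R DZ p q ca a delta b hDZ hp hca hcad ha hdl hq r l (l + 1) rpos r1 l0 hll hg x hB hE).
- move=> hd hne l l0 hl x; split; first exact: hsub.
  move=> [hB hE].
  pose lp := (l + (nv s)%:R / (delta%:R - (mv s)%:R)) / 2.
  have lp0 : 0 < lp by rewrite /lp; lra.
  have lpa : lp < (nv s)%:R / (delta%:R - (mv s)%:R) by rewrite /lp; lra.
  have [e e0 he] := support_gap hNP lp0 (ek_case2 hNP hs1 hT hd hne lp0 lpa).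
  have hll : l < lp by rewrite /lp; lra.
  have hg : exists2 e0 : R, 0 < e0 & forall i j, b i j != 0 -> delta%:R * lp + e0 <= i%:R + lp * j%:R.
    by exists e.
  exact: (@sup_dir R DZ p q ca a delta b hDZ hp hca hcad ha hdl hq r l lp rpos r1 l0 hll hg x hB hE).
Qed.
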